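(* Let $\mathcal G\subseteq\mathsf P^n$ be the gauge group of an $n$-qubit subsystem code, with stabilizer group $\mathcal S=\mathcal G^\perp\cap\mathcal G$, dressed logical operators $\mathcal S^\perp$, and distance $d$, the minimal weight of an element of $\mathcal S^\perp\setminus\mathcal G$. Let $\Gamma\subseteq 2^{[n]}$ with $|\gamma|\le\lfloor\frac{d-1}{2}\rfloor$ for all $\gamma\in\Gamma$, and let $P=\mathop{\ast}_{\gamma\in\Gamma}P_\gamma$ where each $P_\gamma$ is a probability distribution on $\mathsf P^n$ supported on Paulis with support in $\gamma$ and with $P_\gamma(I)>\tfrac12$. Then the logical channel $P_L(e)=\frac1{|\mathcal G|}\sum_{g\in\mathcal G}P(eg)$ is uniquely determined by the stabilizer measurement statistics $E(s)=\sum_{e\in\mathsf P^n}\langle s,e\rangle P(e)$, $s\in\mathcal S$ (among all channels of this form with the same $\Gamma$).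
   Context: $\mathsf P^n$ is the $n$-qubit Pauli group modulo phases; $\langle a,e\rangle=+1$ if $a,e$ commute and $-1$ otherwise; $B^\perp=\{a:\langle a,b\rangle=1\ \forall b\in B\}$. A subsystem code is specified by an arbitrary subgroup $\mathcal G\subseteq\mathsf P^n$ (not necessarily with $\mathcal G\subseteq\mathcal G^\perp$). Weight and support of a Pauli: number/set of qubits on which it acts nontrivially. Phenomenological noise: in each round an independent error $e\sim P$ occurs and the measurement of $s\in\mathcal S$ yields $\langle s,e\rangle$. Convolution: $(f\ast g)(e)=\sum_{e'}f(e')g(ee')$. *)

(* Defs.v *)
From HB Require Import structures.
From mathcomp Require Import all_boot all_order all_algebra.
Set Implicit Arguments. Unset Strict Implicit. Unset Printing Implicit Defensive.
Import Order.TTheory GRing.Theory Num.Theory.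
Local Open Scope ring_scope.

(* n-qubit Pauli group modulo phases: each qubit carries (x-bit, z-bit);
   (false,false)=I, (true,false)=X, (false,true)=Z, (true,true)=Y. *)
Definition pauli (n : nat) := {ffun 'I_n -> bool * bool}.

Definition pid (n : nat) : pauli n := [ffun _ => (false, false)].

Definition pmul (n : nat) (a b : pauli n) : pauli n :=
  [ffun i => (((a i).1 (+) (b i).1), ((a i).2 (+) (b i).2))].

(* a and e commute iff the symplectic form vanishes *)
Definition pcommute (n : nat) (a e : pauli n) : bool :=
  ~~ odd (\sum_(i < n) (((a i).1 && (e i).2) + ((a i).2 && (e i).1))%N).

Definition psign (R : ringType) (n : nat) (a e : pauli n) : R :=
  if pcommute a e then 1 else -1.

Definition pperp (n : nat) (B : {set pauli n}) : {set pauli n} :=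
  [set a | [forall b in B, pcommute a b]].

Definition psupp (n : nat) (a : pauli n) : {set 'I_n} :=
  [set i | a i != (false, false)].

Definition pweight (n : nat) (a : pauli n) : nat := #|psupp a|.

Definition is_subgroup (n : nat) (G : {set pauli n}) : Prop :=
  pid n \in G /\ (forall a b, a \in G -> b \in G -> pmul a b \in G).

Definition stab (n : nat) (G : {set pauli n}) : {set pauli n} :=
  pperp G :&: G.

Definition is_distance (n : nat) (G : {set pauli n}) (d : nat) : Prop :=
  (exists2 a, a \in pperp (stab G) :\: G & pweight a = d) /\
  (forall a, a \in pperp (stab G) :\: G -> (d <= pweight a)%N).

Definition is_distribution (R : realFieldType) (n : nat) (p : pauli n -> R) : Prop :=
  (forall e, 0 <= p e) /\ \sum_(e : pauli n) p e = 1.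

Definition conv (R : ringType) (n : nat) (f g : pauli n -> R) : pauli n -> R :=
  fun e => \sum_(e' : pauli n) f e' * g (pmul e e').

Definition delta_id (R : ringType) (n : nat) : pauli n -> R :=
  fun e => if e == pid n then 1 else 0.

Definition conv_over (R : ringType) (n : nat) (Gamma : {set {set 'I_n}})
  (Pg : {set 'I_n} -> pauli n -> R) : pauli n -> R :=
  foldr (@conv R n) (@delta_id R n) [seq Pg g | g <- enum Gamma].

Definition logical_channel (R : realFieldType) (n : nat) (G : {set pauli n})
  (P : pauli n -> R) : pauli n -> R :=
  fun e => (#|G|%:R)^-1 * \sum_(g in G) P (pmul e g).

Definition syndrome_stats (R : realFieldType) (n : nat) (P : pauli n -> R) :
  pauli n -> R :=
  fun s => \sum_(e : pauli n) psign R s e * P e.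

Definition local_family (R : realFieldType) (n : nat) (Gamma : {set {set 'I_n}})
  (Pg : {set 'I_n} -> pauli n -> R) : Prop :=
  forall g, g \in Gamma ->
    [/\ is_distribution (Pg g),
        (forall e, Pg g e != 0 -> psupp e \subset g)
      & 2^-1 < Pg g (pid n)].

(* Main.v *)
Require Import Defs.
From mathcomp Require Import all_boot all_order all_algebra ring lra zify.
Import Order.TTheory GRing.Theory Num.Theory.
Local Open Scope ring_scope.
Set Implicit Arguments. Unset Strict Implicit. Unset Printing Implicit Defensive.
Section Pauli.
Variable n : nat.
Implicit Types a b c e u x y : pauli n.

Lemma pmulC a b : pmul a b = pmul b a.
Proof. by apply/ffunP => i; rewrite !ffunE; case: (a i) => [[] []]; case: (b i) => [[] []]. Qed.
Lemma pmulA a b c : pmul a (pmul b c) = pmul (pmul a b) c.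
Proof. by apply/ffunP => i; rewrite !ffunE /=; case: (a i) => [[] []]; case: (b i) => [[] []]; case: (c i) => [[] []]. Qed.
Lemma pmulK a b : pmul (pmul a b) b = a.
Proof. by apply/ffunP => i; rewrite !ffunE /=; case: (a i) => [[] []]; case: (b i) => [[] []]. Qed.
Lemma pmul1 a : pmul (pid n) a = a.
Proof. by apply/ffunP => i; rewrite !ffunE /=; case: (a i) => [[] []]. Qed.
Lemma pmulxx a : pmul a a = pid n.
Proof. by apply/ffunP => i; rewrite !ffunE /=; case: (a i) => [[] []]. Qed.

Definition tm a e i : nat := (((a i).1 && (e i).2) + ((a i).2 && (e i).1))%N.

Lemma pcommuteE a e : pcommute a e = ~~ \big[addb/false]_(i < n) odd (tm a e i).
Proof. by rewrite /pcommute (big_morph odd oddD (erefl _)). Qed.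

Lemma pcommuteC a e : pcommute a e = pcommute e a.
Proof.
rewrite !pcommuteE; congr (~~ _); apply: eq_bigr => i _; rewrite /tm.
by case: (a i) => [[] []]; case: (e i) => [[] []].
Qed.

Lemma pcommuteM a b c : pcommute a (pmul b c) = (pcommute a b == pcommute a c).
Proof.
rewrite !pcommuteE.
have -> : \big[addb/false]_(i < n) odd (tm a (pmul b c) i) =
   \big[addb/false]_(i < n) (odd (tm a b i) (+) odd (tm a c i)).
  apply: eq_bigr => i _; rewrite /tm !ffunE /=.
  by case: (a i) => [[] []]; case: (b i) => [[] []]; case: (c i) => [[] []].
rewrite big_split /=.
by case: (\big[addb/false]_(i < n) odd (tm a b i)); case: (\big[addb/false]_(i < n) odd (tm a c i)).
Qed.

Lemma pcommute_disj u e :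
  (forall j, u j = (false, false) \/ e j = (false, false)) -> pcommute u e.
Proof.
move=> H; rewrite pcommuteE big1 // => i _; rewrite /tm.
by case: (H i) => ->; case: (u i) => [[] []]; case: (e i) => [[] []].
Qed.

Lemma pcommute1 a : pcommute a (pid n).
Proof. by apply: pcommute_disj => j; right; rewrite ffunE. Qed.

Definition flip b (i : 'I_n) : pauli n :=
  [ffun j => if j == i then (~~ (b i).1, (b i).1) else (false, false)].

Lemma flip_anti b i : b i != (false, false) -> pcommute (flip b i) b = false.
Proof.
move=> Hb; rewrite pcommuteE (bigD1 i) //= big1 /=.
  rewrite /tm ffunE eqxx /=; move: Hb.
  by case: (b i) => [[] []].
by move=> j /negbTE Hj; rewrite /tm ffunE Hj.
Qed.

Lemma flip_out b i j : j != i -> flip b i j = (false, false).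
Proof. by move=> /negbTE H; rewrite ffunE H. Qed.

Variable R : ringType.

Lemma psignM a b c : psign R a (pmul b c) = psign R a b * psign R a c.
Proof.
rewrite /psign pcommuteM.
by case: (pcommute a b); case: (pcommute a c); rewrite /= ?mulr1 ?mul1r ?mulN1r ?opprK.
Qed.

Lemma psignC a b : psign R a b = psign R b a.
Proof. by rewrite /psign pcommuteC. Qed.

Lemma psignMl a b c : psign R (pmul a b) c = psign R a c * psign R b c.
Proof. by rewrite psignC psignM !(psignC c). Qed.

Lemma psign1 a : psign R a (pid n) = 1.
Proof. by rewrite /psign pcommute1. Qed.

Lemma psign_sq a b : psign R a b * psign R a b = 1.
Proof. by rewrite /psign; case: (pcommute a b); [rewrite mulr1|rewrite mulrNN mulr1]. Qed.

End Pauli.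
Section Sums.
Variable n : nat.
Variable R : numDomainType.

Lemma reindex_mul (V : Type) (idx : V) (op : Monoid.com_law idx) (T : {set pauli n}) u (F : pauli n -> V) :
  (forall a b, a \in T -> b \in T -> pmul a b \in T) -> u \in T ->
  \big[op/idx]_(s in T) F s = \big[op/idx]_(s in T) F (pmul s u).
Proof.
move=> HT Hu.
rewrite [LHS](reindex_inj (h := fun x => pmul x u) (can_inj (g := fun x => pmul x u) (fun x => @pmulK n x u))) /=.
apply: eq_bigl => s; apply/idP/idP => Hs.
  by rewrite -(pmulK s u); apply: HT.
by apply: HT.
Qed.

Lemma sum_sign_set (T : {set pauli n}) w :
  (forall a b, a \in T -> b \in T -> pmul a b \in T) ->
  \sum_(s in T) psign R s w = if [forall s in T, pcommute s w] then #|T|%:R else 0.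
Proof.
move=> HT; case: ifP => [/forallP H|/negbT].
  rewrite -sumr_const; apply: eq_bigr => s Hs.
  by rewrite /psign (implyP (H s) Hs).
rewrite negb_forall => /existsP [u]; rewrite negb_imply => /andP [Hu Hc].
set S := \sum_(s in T) _.
have : S = - S.
  rewrite {1}/S (reindex_mul _ _ HT Hu) /S -mulrN1 mulr_suml.
  apply: eq_bigr => s _; rewrite psignMl; congr (_ * _).
  by rewrite /psign (negbTE Hc).
move=> HS; have : S *+ 2 == 0 by rewrite mulr2n {1}HS addNr.
by rewrite mulrn_eq0 /= => /eqP.
Qed.

Lemma sum_sign_all w :
  \sum_s psign R s w = if w == pid n then #|{: pauli n}|%:R else 0.
Proof.
have := @sum_sign_set [set: pauli n] w (fun a b _ _ => in_setT _).
have -> : \sum_(s in [set: pauli n]) psign R s w = \sum_s psign R s w.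
  by apply: eq_bigl => s; rewrite in_setT.
move=> ->; rewrite cardsT.
case: eqP => [->|/eqP Hw].
  by rewrite ifT //; apply/forallP => s; apply/implyP => _; apply: pcommute1.
rewrite ifF //; apply/negbTE; rewrite negb_forall; apply/existsP.
have [i Hi] : exists i, w i != (false, false).
  apply/existsP; move: Hw; apply: contraR; rewrite negb_exists => /forallP H.
  by apply/eqP/ffunP => i; rewrite ffunE; apply/eqP; move: (H i); rewrite negbK.
by exists (flip w i); rewrite in_setT /= flip_anti.
Qed.

Lemma sum_sign2 (x y : pauli n) :
  \sum_b psign R b x * psign R b y = if x == y then #|{: pauli n}|%:R else 0.
Proof.
have -> : (x == y) = (pmul x y == pid n).
  apply/eqP/eqP => [->|H]; first by rewrite pmulxx.
  by rewrite -(pmulK x y) H pmul1.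
by rewrite -sum_sign_all; apply: eq_bigr => b _; rewrite psignM.
Qed.

End Sums.
Section Fourier.
Variable n : nat.
Variable R : realFieldType.
Implicit Types f g : pauli n -> R.

Lemma reindex_all (V : Type) (idx : V) (op : Monoid.com_law idx) u (F : pauli n -> V) :
  \big[op/idx]_s F s = \big[op/idx]_s F (pmul s u).
Proof.
by rewrite [LHS](reindex_inj (h := fun x => pmul x u) (can_inj (g := fun x => pmul x u) (fun x => @pmulK n x u))).
Qed.

Lemma hat_delta x : syndrome_stats (@delta_id R n) x = 1.
Proof.
rewrite /syndrome_stats (bigD1 (pid n)) //= big1 ?addr0.
  by rewrite /delta_id eqxx psign1 mulr1.
by move=> e /negbTE He; rewrite /delta_id He mulr0.
Qed.

Lemma hat_conv f g c :
  syndrome_stats (conv f g) c = syndrome_stats f c * syndrome_stats g c.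
Proof.
rewrite /syndrome_stats /conv mulr_suml.
under eq_bigr do rewrite mulr_sumr.
rewrite exchange_big /=; apply: eq_bigr => e' _.
rewrite (reindex_all _ e') /= mulr_sumr; apply: eq_bigr => e _.
by rewrite pmulK psignM; ring.
Qed.

Lemma hat_conv_over (Gamma : {set {set 'I_n}}) (Pg : {set 'I_n} -> pauli n -> R) c :
  syndrome_stats (conv_over Gamma Pg) c = \prod_(g in Gamma) syndrome_stats (Pg g) c.
Proof.
rewrite /conv_over -big_enum /=; elim: (enum Gamma) => [|g l IH] /=.
  by rewrite big_nil hat_delta.
by rewrite big_cons hat_conv IH.
Qed.

Lemma hat_pos (p : pauli n -> R) x :
  is_distribution p -> 2^-1 < p (pid n) -> 0 < syndrome_stats p x.
Proof.
move=> [H0 H1] Hid.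
have Hrest : \sum_(e | e != pid n) p e = 1 - p (pid n).
  by rewrite -H1 [in RHS](bigD1 (pid n)) //= addrC addrK.
have : p (pid n) - \sum_(e | e != pid n) p e <= syndrome_stats p x.
  rewrite /syndrome_stats [X in _ <= X](bigD1 (pid n)) //= psign1 mul1r lerD2l.
  rewrite -sumrN; apply: ler_sum => e _.
  rewrite /psign; case: pcommute; rewrite ?mul1r ?mulN1r //.
  by rewrite (le_trans _ (H0 e)) // oppr_le0.
apply: lt_le_trans; rewrite Hrest; lra.
Qed.

Lemma hat_local (p : pauli n -> R) (gm : {set 'I_n}) (x u : pauli n) :
  (forall e, p e != 0 -> psupp e \subset gm) ->
  (forall j, j \in gm -> u j = (false, false)) ->
  syndrome_stats p (pmul x u) = syndrome_stats p x.
Proof.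
move=> Hs Hu; apply: eq_bigr => e _.
have [->|Hp] := eqVneq (p e) 0; first by rewrite !mulr0.
rewrite psignMl [psign R u e]/psign pcommute_disj ?mulr1 //.
move=> j; case: (boolP (j \in gm)) => Hj; first by left; apply: Hu.
right; move/subsetP: (Hs e Hp) => /(_ j); rewrite inE.
by case: eqP => // _ /(_ isT) Hj'; rewrite Hj' in Hj.
Qed.

Lemma fourier_inv f x :
  f x * #|{: pauli n}|%:R = \sum_c psign R c x * syndrome_stats f c.
Proof.
rewrite /syndrome_stats.
under eq_bigr do rewrite mulr_sumr.
rewrite exchange_big /= (bigD1 x) //= [X in _ + X]big1 ?addr0.
  under eq_bigr do rewrite mulrA; rewrite -mulr_suml sum_sign2 eqxx.
  by rewrite mulrC.
move=> y Hy.
under eq_bigr do rewrite mulrA; rewrite -mulr_suml sum_sign2.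
by rewrite eq_sym (negbTE Hy) mul0r.
Qed.

End Fourier.
Section Mult.
Variable R : realFieldType.

Lemma prodXz (I : Type) (r : seq I) (P : pred I) (f : I -> R) (z : int) :
  (\prod_(i <- r | P i) f i) ^ z = \prod_(i <- r | P i) f i ^ z.
Proof. exact: (big_morph (fun x => x ^ z) (fun x y => expfzMl x y z) (exp1rz _ z)). Qed.

Lemma prod_expz (I : Type) (r : seq I) (P : pred I) (x : R) (f : I -> int) :
  x != 0 -> \prod_(i <- r | P i) x ^ f i = x ^ (\sum_(i <- r | P i) f i).
Proof.
move=> Hx; symmetry.
exact: (big_morph (fun k => x ^ k) (fun a b => expfzDr a b Hx) (expr0z x)).
Qed.

Lemma pos_eq1 (k : R) (m : nat) : 0 < k -> (0 < m)%N -> k ^+ m = 1 -> k = 1.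
Proof. by move=> Hk Hm /eqP; rewrite pexpr_eq1 ?ltW // => /eqP. Qed.

Variable n : nat.

Lemma prod_flip (h : pauli n -> R) b u :
  (forall x, 0 < h x) -> (forall x, h (pmul x u) = h x) -> pcommute u b = false ->
  \prod_x h x ^ psign int x b = 1.
Proof.
move=> Hp Hh Hu.
set k := \prod_x _.
have Hk : 0 < k by apply: prodr_gt0 => x _; apply: exprz_gt0.
have Hkk : k = k^-1.
  rewrite {1}/k (reindex_all _ u) /k -prodfV; apply: eq_bigr => x _.
  rewrite Hh psignMl [psign int u b]/psign Hu mulrN1 invr_expz //.
apply: (@pos_eq1 k 2) => //.
by rewrite expr2 {1}Hkk mulVf // gt_eqF.
Qed.

Lemma perp_mul (B : {set pauli n}) a a' :
  a \in pperp B -> a' \in pperp B -> pmul a a' \in pperp B.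
Proof.
rewrite !inE => /forallP H1 /forallP H2; apply/forallP => b; apply/implyP => Hb.
rewrite pcommuteC pcommuteM !(pcommuteC b).
by rewrite (implyP (H1 b) Hb) (implyP (H2 b) Hb).
Qed.

Lemma perp_id (B : {set pauli n}) : pid n \in pperp B.
Proof. by rewrite inE; apply/forallP => b; apply/implyP => _; rewrite pcommuteC pcommute1. Qed.

Lemma perp_forall (B : {set pauli n}) w :
  [forall s in B, pcommute s w] = (w \in pperp B).
Proof.
rewrite inE; apply: eq_forallb => s; apply: congr1; exact: pcommuteC.
Qed.

Lemma chan_eq (G : {set pauli n}) (P Q : pauli n -> R) :
  is_subgroup G ->
  (forall c, c \in pperp G -> syndrome_stats P c = syndrome_stats Q c) ->
  forall e, logical_channel G P e = logical_channel G Q e.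
Proof.
move=> [_ HG] Heq e; rewrite /logical_channel; congr (_ * _).
have HM : (#|{: pauli n}|%:R : R) != 0.
  by rewrite pnatr_eq0 -lt0n; apply/card_gt0P; exists (pid n).
apply: (mulIf HM); rewrite !mulr_suml.
have key : forall (P' : pauli n -> R), \sum_(g in G) P' (pmul e g) * #|{: pauli n}|%:R =
   \sum_c psign R c e * syndrome_stats P' c * \sum_(g in G) psign R c g.
  move=> P'; under eq_bigr do rewrite fourier_inv.
  rewrite exchange_big /=; apply: eq_bigr => c _; rewrite mulr_sumr.
  by apply: eq_bigr => g _; rewrite psignM; ring.
rewrite !key; apply: eq_bigr => c _.
have -> : \sum_(g in G) psign R c g = if c \in pperp G then #|G|%:R else 0.
  rewrite -perp_forall -sum_sign_set //.
  by apply: eq_bigr => g _; rewrite psignC.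
by case: ifP => Hc; rewrite ?mulr0 // Heq.
Qed.

End Mult.

Lemma pmul_mid (n : nat) (x b y : pauli n) : pmul (pmul x b) (pmul b y) = pmul x y.
Proof. by apply/ffunP => i; rewrite !ffunE /=; case: (x i) => [[] []]; case: (b i) => [[] []]; case: (y i) => [[] []]. Qed.

Lemma psupp_mul (n : nat) (a b : pauli n) : psupp (pmul a b) \subset psupp a :|: psupp b.
Proof.
apply/subsetP => i; rewrite !inE ffunE; apply: contraR; rewrite negb_or !negbK.
by move=> /andP [/eqP -> /eqP ->].
Qed.

Arguments pmul_mid {n}.
Unset Implicit Arguments.
Arguments psupp_mul {n}.

Theorem corollary1 (R : realFieldType) (n : nat) (G : {set pauli n}) (d : nat)
  (Gamma : {set {set 'I_n}}) (Pg Qg : {set 'I_n} -> pauli n -> R) :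
  is_subgroup G ->
  is_distance G d ->
  (forall g, g \in Gamma -> (#|g| <= (d.-1)./2)%N) ->
  local_family Gamma Pg ->
  local_family Gamma Qg ->
  (forall s, s \in stab G ->
     syndrome_stats (conv_over Gamma Pg) s = syndrome_stats (conv_over Gamma Qg) s) ->
  forall e, logical_channel G (conv_over Gamma Pg) e = logical_channel G (conv_over Gamma Qg) e.
Proof.
move=> HG [[a0 Ha0 Hwa0] Hdmin] HGam HP HQ Hstat.
apply: chan_eq => //.
case: HG => HGid HGmul.
set S := stab G.
have HSmul : forall a b, a \in S -> b \in S -> pmul a b \in S.
  move=> a b; rewrite /S /stab !in_setI => /andP [Ha Ha'] /andP [Hb Hb'].
  by rewrite HGmul // andbT; apply: perp_mul.
have HSid : pid n \in S by rewrite /S /stab in_setI HGid andbT perp_id.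
have Hd : (0 < d)%N.
  rewrite lt0n; apply/negP => /eqP Hd0; move: Ha0; rewrite inE => /andP [Hn _].
  move: Hn; apply/negP; rewrite negbK.
  have -> : a0 = pid n; last by [].
  apply/ffunP => i; rewrite ffunE; apply/eqP; apply: contraT => Hi.
  have : i \in psupp a0 by rewrite inE.
  by rewrite (_ : psupp a0 = set0) ?inE //; apply/eqP; rewrite -cards_eq0; rewrite /pweight in Hwa0; rewrite Hwa0 Hd0.
set sP := fun g x => syndrome_stats (Pg g) x.
set sQ := fun g x => syndrome_stats (Qg g) x.
have sPpos : forall g x, g \in Gamma -> 0 < sP g x.
  by move=> g x Hg; case: (HP g Hg) => H1 _ H3; apply: hat_pos.
have sQpos : forall g x, g \in Gamma -> 0 < sQ g x.
  by move=> g x Hg; case: (HQ g Hg) => H1 _ H3; apply: hat_pos.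
set H := fun x => syndrome_stats (conv_over Gamma Pg) x / syndrome_stats (conv_over Gamma Qg) x.
have HE : forall x, H x = \prod_(g in Gamma) (sP g x / sQ g x).
  by move=> x; rewrite /H !hat_conv_over prodf_div.
have Hpos : forall x, 0 < H x.
  by move=> x; rewrite HE; apply: prodr_gt0 => g Hg; apply: divr_gt0; [apply: sPpos|apply: sQpos].
set K := fun b => \prod_x H x ^ psign int x b.
have Kpos : forall b, 0 < K b.
  by move=> b; apply: prodr_gt0 => x _; apply: exprz_gt0.
set Blow := [set b : pauli n | [exists g in Gamma, psupp b \subset g]].
have Koff : forall b, b \notin Blow -> K b = 1.
  move=> b Hb; rewrite /K.
  under eq_bigr do rewrite HE prodXz.
  rewrite exchange_big /=; apply: big1 => g Hg.
  have [i Hi Hig] : exists2 i, i \in psupp b & i \notin g.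
    apply/subsetPn; move: Hb; rewrite inE negb_exists => /forallP /(_ g).
    by rewrite Hg.
  apply: (@prod_flip R n _ b (flip b i)).
  - by move=> x; apply: divr_gt0; [apply: sPpos|apply: sQpos].
  - move=> x; rewrite /sP /sQ.
    have Hu : forall j, j \in g -> flip b i j = (false, false).
      by move=> j Hj; apply: flip_out; apply: contraNneq Hig => <-.
    case: (HP g Hg) => _ HPs _; case: (HQ g Hg) => _ HQs _.
    by rewrite (hat_local _ HPs Hu) (hat_local _ HQs Hu).
  - by apply: flip_anti; move: Hi; rewrite inE.
set M := #|{: pauli n}|.
have HM : (0 < M)%N by apply/card_gt0P; exists (pid n).
have Hinv : forall y, H y ^+ M = \prod_b K b ^ psign int y b.
  move=> y; rewrite /K.
  under eq_bigr do rewrite prodXz.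
  under eq_bigr do under eq_bigr do rewrite exprz_exp.
  rewrite exchange_big /=.
  under eq_bigr => x _ do rewrite prod_expz ?gt_eqF ?Hpos //.
  have Hs : forall x, \sum_b psign int x b * psign int y b = if x == y then M%:R else 0.
    by move=> x; rewrite -sum_sign2; apply: eq_bigr => b _; rewrite !(psignC _ b).
  under eq_bigr do rewrite Hs.
  rewrite (bigD1 y) //= eqxx big1 ?mulr1.
    by rewrite natz.
  by move=> x /negbTE ->; rewrite expr0z.
have Kblow : forall y, \prod_b K b ^ psign int y b = \prod_(b in Blow) K b ^ psign int y b.
  move=> y; rewrite (bigID (mem Blow)) /= [X in _ * X]big1 ?mulr1 //.
  by move=> b Hb; rewrite Koff ?exp1rz.
set A := fun b0 => [set b in Blow | pmul b b0 \in pperp S].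
have stepS : forall b0, b0 \in Blow -> \prod_(b in A b0) K b = 1.
  move=> b0 Hb0.
  have HS1 : forall s, s \in S -> \prod_(b in Blow) K b ^ psign int s b = 1.
    move=> s Hs; rewrite -Kblow -Hinv.
    have -> : H s = 1.
      rewrite /H Hstat // divff // gt_eqF // hat_conv_over.
      by apply: prodr_gt0 => g Hg; apply: sQpos.
    by rewrite expr1n.
  have : \prod_(s in S) (\prod_(b in Blow) K b ^ psign int s b) ^ psign int s b0 = 1.
    by apply: big1 => s Hs; rewrite HS1 // exp1rz.
  under eq_bigr do rewrite prodXz.
  under eq_bigr do under eq_bigr do rewrite exprz_exp.
  rewrite exchange_big /=.
  under eq_bigr => b _ do rewrite prod_expz ?gt_eqF ?Kpos //.
  have Hsum : forall b, \sum_(s in S) psign int s b * psign int s b0 =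
      if pmul b b0 \in pperp S then #|S|%:R else 0.
    move=> b; rewrite -perp_forall -sum_sign_set //.
    by apply: eq_bigr => s _; rewrite psignM.
  under eq_bigr do rewrite Hsum.
  move=> Hprod.
  apply: (@pos_eq1 R _ #|S|); first by apply: prodr_gt0.
    by apply/card_gt0P; exists (pid n).
  rewrite -[RHS]Hprod.
  have Hcase : forall b, K b ^ (if pmul b b0 \in pperp S then (#|S|%:R : int) else 0) = if pmul b b0 \in pperp S then K b ^+ #|S| else 1.
    by move=> b; case: ifP => _; rewrite ?expr0z ?natz.
  under [RHS]eq_bigr do rewrite Hcase.
  rewrite -big_mkcondr /= prodrXl; congr (_ ^+ _).
  by apply: eq_bigl => b; rewrite inE.
move=> c Hc.
have Ain : forall x b, (x \in A b) = (x \in Blow) && (pmul x b \in pperp S).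
  by move=> x b; rewrite /A in_set.
have wb : forall b, b \in Blow -> (#|psupp b| <= (d.-1)./2)%N.
  move=> b; rewrite inE => /existsP [g /andP [Hg Hs]]; apply: leq_trans (HGam g Hg).
  exact: subset_leq_card.
have Hw : forall b b0, b \in Blow -> b0 \in Blow -> pmul b b0 \in pperp S -> pmul b b0 \in G.
  move=> b b0 Hb Hb0 Hbb; apply: contraT => HnG.
  have := Hdmin (pmul b b0); rewrite in_setD HnG Hbb => /(_ isT).
  rewrite /pweight => Hle.
  have := subset_leq_card (psupp_mul b b0); rewrite cardsU.
  have := wb b Hb; have := wb b0 Hb0; rewrite -divn2. lia.
have Hrel : forall b b0, b \in Blow -> b0 \in Blow -> (A b == A b0) = (pmul b b0 \in pperp S).
  move=> b b0 Hb Hb0; apply/eqP/idP => [HA|Hbb].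
    have : b \in A b by rewrite Ain Hb pmulxx perp_id.
    by rewrite HA Ain => /andP [].
  apply/setP => x; rewrite !Ain; case: (x \in Blow) => //=.
  apply/idP/idP => Hx.
    by rewrite -(pmul_mid x b b0); apply: perp_mul.
  by rewrite -(pmul_mid x b0 b); apply: perp_mul => //; rewrite pmulC.
have Hsgn : forall b b0, b \in Blow -> b0 \in Blow -> pmul b b0 \in pperp S -> psign int c b = psign int c b0.
  move=> b b0 Hb Hb0 Hbb.
  rewrite -{1}(pmulK b b0) psignM [psign int c (pmul b b0)]/psign.
  move: Hc; rewrite inE => /forallP /(_ (pmul b b0)) /implyP /(_ (Hw b b0 Hb Hb0 Hbb)) ->.
  by rewrite mul1r.
have : H c ^+ M = 1.
  rewrite Hinv Kblow (partition_big_imset A) /=; apply: big1 => C /imsetP [b0 Hb0 ->].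
  rewrite (eq_big (fun b => b \in A b0) (fun b => K b ^ psign int c b0)).
  - by rewrite -prodXz stepS // exp1rz.
  - move=> b; rewrite Ain /=; case Hb: (b \in Blow) => //=.
    by rewrite Hrel.
  - by move=> b /andP [Hb HA]; rewrite (Hsgn b b0) // -Hrel.
move/(pos_eq1 (Hpos c) HM) => H1.
have HQnz : syndrome_stats (conv_over Gamma Qg) c != 0.
  by rewrite gt_eqF // hat_conv_over; apply: prodr_gt0 => g Hg; apply: sQpos.
by rewrite -[LHS](divfK HQnz) -/(H c) H1 mul1r.
Qed.
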